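(* Let $r, l, h, l', m, n$ be positive integers and let $$P = \left\{ \left( \left\lfloor \tfrac{y}{h} \right\rfloor l' + t,\; y \right) : t \in \{0,\dots,l-1\},\ y \in \{0,\dots,rh-1\} \right\}$$ be the structured dense polygon with parameters $(r,l,h,l')$. Let $\kappa = \gcd(m,h)$, $m = \tau_m \kappa$, $h = \tau_h \kappa$, and write $\tau_m = \alpha \tau_h + \beta$ with integers $\alpha \ge 0$ and $0 \le \beta < \tau_h$. Assume $\tau_m$ divides $r$. Then the number $\lambda_{naive}$ of thread blocks produced by the Naive Tiling Algorithm on $P$ with $m \times n$ thread blocks is $$\lambda_{naive} = \begin{cases} \dfrac{r}{\tau_m}\left( \tau_h \left\lceil \dfrac{l + (\alpha-1) l'}{n} \right\rceil \right) & \text{if } \beta = 0,\\[2ex] \dfrac{r}{\tau_m}\left( (\beta-1) \left\lceil \dfrac{l + (\alpha+1) l'}{n} \right\rceil + (\tau_h - \beta + 1)\left\lceil \dfrac{l + \alpha l'}{n} \right\rceil \right) & \text{if } \beta \neq 0. \end{cases}$$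
   Context: Points are pairs $(x,y)$ with $x$ the column index and $y$ the row index. For the structured dense polygon $P$ with parameters $(r,l,h,l')$, the $q$-th slab ($q = 0,\dots,r-1$) is the set of rows $\{qh, \dots, (q+1)h - 1\}$; rows in slab $q$ contain exactly the columns $ql', \dots, ql' + l - 1$. The Naive Tiling Algorithm (with thread blocks of size $m \times n$) partitions the rows $\{0,\dots,rh-1\}$ into consecutive patches of $m$ rows, the $k$-th patch ($k = 1, \dots, rh/m$) being rows $\{(k-1)m, \dots, km-1\}$, and tiles each patch from left to right. If the $k$-th patch intersects (in rows) exactly $t_k \ge 1$ slabs, its width is defined as $w^{(k)} = l + (t_k - 1) l'$, and the algorithm uses $\lceil w^{(k)}/n \rceil$ thread blocks for that patch; thus $\lambda_{naive} = \sum_{k=1}^{rh/m} \lceil w^{(k)}/n \rceil$. *)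

(* Defs.v *)
From mathcomp Require Import all_boot.
Set Implicit Arguments. Unset Strict Implicit. Unset Printing Implicit Defensive.

Definition ceildiv (a n : nat) : nat := (a + n - 1) %/ n.

Definition patch_rows (m k : nat) : seq nat := iota ((k - 1) * m) m.

Definition slab_meets_patch (h m k q : nat) : bool :=
  has (fun y => (q * h <= y) && (y < q.+1 * h)) (patch_rows m k).

Definition t_patch (r h m k : nat) : nat :=
  count (slab_meets_patch h m k) (iota 0 r).

Definition patch_width (r l h l' m k : nat) : nat :=
  l + (t_patch r h m k - 1) * l'.

Definition lambda_naive (r l h l' m n : nat) : nat :=
  \sum_(1 <= k < (r * h) %/ m + 1) ceildiv (patch_width r l h l' m k) n.

(* Main.v *)
Require Import Defs.
From mathcomp Require Import all_boot zify.

Lemma count_int A B r : count (fun q => (A <= q) && (q <= B)) (iota 0 r) = minn r B.+1 - minn r A.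
Proof.
elim: r => [|r IH]; first by rewrite /= !min0n.
rewrite -addn1 iotaD count_cat IH /= add0n.
case: (leqP A r) => h1; case: (leqP r B) => h2 /=; lia.
Qed.

Lemma slab_meets h m k q : 0 < h -> 0 < m ->
  slab_meets_patch h m k q = ((k-1)*m %/ h <= q) && (q <= ((k-1)*m + m - 1) %/ h).
Proof.
move=> hp mp; rewrite /slab_meets_patch /patch_rows.
set s := (k-1)*m.
apply/hasP/andP.
- move=> [y]; rewrite mem_iota => /andP[y1 y2] /andP[q1 q2].
  have qy : q = y %/ h.
    apply/eqP; rewrite eqn_leq leq_divRL // q1 /=.
    by rewrite -ltnS ltn_divLR // mulSn addnC.
  rewrite qy; split; apply: leq_div2r => //; lia.
- move=> [q1 q2]; exists (maxn s (q*h)).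
  + rewrite mem_iota; rewrite leq_divRL // in q2; apply/andP; split; lia.
  + rewrite leq_divRL // in q2.
    have : s < q.+1 * h by rewrite -ltn_divLR // ltnS.
    rewrite mulSn; lia.
Qed.

Lemma t_patch_eq r h m k : 0 < h -> 0 < m -> 0 < k -> k * m <= r * h ->
  t_patch r h m k = ((k-1)*m + m - 1) %/ h - (k-1)*m %/ h + 1.
Proof.
move=> hp mp kp kmr; rewrite /t_patch (eq_count (fun q => @slab_meets h m k q hp mp)) count_int.
have AB : (k-1)*m %/ h <= ((k-1)*m + m - 1) %/ h by apply: leq_div2r; lia.
have Br : ((k-1)*m + m - 1) %/ h < r by rewrite ltn_divLR //; nia.
lia.
Qed.

Definition g tm th j := (j*tm + tm - 1) %/ th - (j*tm) %/ th.

Lemma red_kappa k tm th ka : 0 < ka -> 0 < tm -> 0 < th ->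
  ((k-1)*(tm*ka) + tm*ka - 1) %/ (th*ka) - (k-1)*(tm*ka) %/ (th*ka) = g tm th (k-1).
Proof.
move=> kap tmp thp; rewrite /g.
have -> : (k-1)*(tm*ka) = ((k-1)*tm)*ka by rewrite mulnA.
rewrite divnMr //; congr (_ - _).
have -> : (k - 1) * tm * ka + tm * ka - 1 = ((k-1)*tm + tm - 1) * ka + (ka - 1).
  rewrite !mulnBl mulnDl mul1n; nia.
by rewrite (mulnC th) divnMA divnMDl // (divn_small (m:=ka-1)) ?addn0 //; lia.
Qed.

Lemma g_period tm th j : 0 < th -> 0 < tm -> g tm th (j + th) = g tm th j.
Proof.
move=> thp tmp; rewrite /g.
have -> : (j + th) * tm + tm - 1 = tm * th + (j * tm + tm - 1) by lia.
have -> : (j + th) * tm = tm * th + j * tm by lia.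
by rewrite !divnMDl // subnDl.
Qed.

Lemma sum_period (G : nat -> nat) th c : (forall j, G (j + th) = G j) ->
  \sum_(0 <= j < c * th) G j = c * \sum_(0 <= j < th) G j.
Proof.
move=> Gp; elim: c => [|c IH]; first by rewrite !mul0n big_geq.
rewrite mulSnr (@big_cat_nat _ _ _ (c * th)) //=; last by rewrite leq_addr.
rewrite IH mulSnr; congr (_ + _).
rewrite -{1}(add0n (c * th)) big_addn addKn.
apply: eq_big_nat => i _.
elim: c {IH} => [|c IH]; first by rewrite addn0.
by rewrite mulSnr addnA Gp.
Qed.

Lemma g_val tm th a b j : 0 < th -> 0 < b -> tm = a * th + b ->
  g tm th j = a + (j * tm %% th + b - 1) %/ th.
Proof.
move=> thp bp E; rewrite /g.
have D := divn_eq (j * tm) th.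
set Q := j * tm %/ th in D *; set u := j * tm %% th in D *.
have ult : u < th by rewrite ltn_mod.
rewrite D.
have -> : Q * th + u + tm - 1 = (Q + a) * th + (u + b - 1) by rewrite E; lia.
by rewrite !divnMDl // -addnA addKn.
Qed.

Lemma reindex_mod (H : nat -> nat) tm th : 0 < th -> coprime tm th ->
  \sum_(0 <= j < th) H (j * tm %% th) = \sum_(0 <= u < th) H u.
Proof.
move=> thp cop.
rewrite /index_iota subn0 -(big_map (fun j => j * tm %% th) xpredT H).
apply: perm_big.
have inj : {in iota 0 th &, injective (fun j => j * tm %% th)}.
  move=> x y; rewrite !mem_iota !add0n => /andP[_ xl] /andP[_ yl] /eqP exy.
  wlog xy : x y xl yl exy / x <= y.
    move=> W; case: (leqP x y) => hxy; first exact: W.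
    by apply/esym/W => //; [rewrite eq_sym | exact: ltnW].
  have le : x * tm <= y * tm by rewrite leq_mul2r xy orbT.
  move: exy; rewrite eq_sym (eqn_mod_dvd _ le) -mulnBl mulnC.
  have c2 : coprime th tm by rewrite coprime_sym.
  rewrite (Gauss_dvdr _ c2).
  case: (posnP (y - x)) => [e|p]; first by lia.
  move/(dvdn_leq p); lia.
have U : uniq [seq j * tm %% th | j <- iota 0 th] by rewrite map_inj_in_uniq // iota_uniq.
apply: uniq_perm => //; first exact: iota_uniq.
have sub : {subset [seq j * tm %% th | j <- iota 0 th] <= iota 0 th}.
  by move=> _ /mapP[j _ ->]; rewrite mem_iota add0n ltn_mod thp.
have sz : size (iota 0 th) <= size [seq j * tm %% th | j <- iota 0 th] by rewrite size_map.
exact: (uniq_min_size U sub sz).2.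
Qed.

Lemma period_sum (F : nat -> nat) tm th a b : 0 < th -> 0 < b -> b < th ->
  tm = a * th + b -> coprime tm th ->
  \sum_(0 <= j < th) F (g tm th j) = (b - 1) * F (a + 1) + (th - b + 1) * F a.
Proof.
move=> thp bp blt E cop.
under eq_big_nat => j _ do rewrite (@g_val tm th a b j thp bp E).
rewrite (@reindex_mod (fun u => F (a + (u + b - 1) %/ th)) tm th thp cop).
rewrite (@big_cat_nat _ _ _ (th - b + 1)) //=; [|lia].
rewrite (@eq_big_nat _ _ _ 0 (th - b + 1) _ (fun _ => F a)); last first.
  move=> i /andP[_ ilt]; rewrite divn_small ?addn0 //; lia.
rewrite (@eq_big_nat _ _ _ (th - b + 1) th _ (fun _ => F (a + 1))); last first.
  move=> i /andP[i1 i2].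
  have -> : i + b - 1 = 1 * th + (i + b - 1 - th) by lia.
  rewrite divnMDl // divn_small //; lia.
rewrite !sum_nat_const_nat subn0 addnC; congr (_ * _ + _); lia.
Qed.

Theorem theorem8 (r l h l' m n kappa tau_m tau_h alpha beta : nat) :
  0 < r -> 0 < l -> 0 < h -> 0 < l' -> 0 < m -> 0 < n ->
  kappa = gcdn m h -> m = tau_m * kappa -> h = tau_h * kappa ->
  tau_m = alpha * tau_h + beta -> beta < tau_h ->
  tau_m %| r ->
  lambda_naive r l h l' m n =
    if beta == 0 then
      (r %/ tau_m) * (tau_h * ceildiv (l + (alpha - 1) * l') n)
    else
      (r %/ tau_m) * ((beta - 1) * ceildiv (l + (alpha + 1) * l') n
                      + (tau_h - beta + 1) * ceildiv (l + alpha * l') n).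
Proof.
move=> rp lp hp l'p mp np Hk Hm Hh Ha bl dr.
have kp : 0 < kappa by rewrite Hk gcdn_gt0 mp.
have tmp : 0 < tau_m by move: mp; rewrite Hm muln_gt0 => /andP[].
have thp : 0 < tau_h by move: hp; rewrite Hh muln_gt0 => /andP[].
have cop : coprime tau_m tau_h.
  rewrite /coprime; apply/eqP.
  have : gcdn tau_m tau_h * kappa = 1 * kappa by rewrite muln_gcdl -Hm -Hh -Hk mul1n.
  by move/eqP; rewrite eqn_pmul2r // => /eqP.
clear Hk.
set F := fun x => ceildiv (l + x * l') n.
have L : lambda_naive r l h l' m n = \sum_(0 <= j < r * h %/ m) F (g tau_m tau_h j).
  rewrite /lambda_naive addn1 big_add1 /=.
  apply: eq_big_nat => i /andP[_ iN].
  have im : i.+1 * m <= r * h by rewrite -leq_divRL.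
  rewrite /patch_width t_patch_eq // addnK Hm Hh red_kappa // subn1.
  done.
have N : r * h %/ m = (r %/ tau_m) * tau_h.
  by rewrite Hm Hh mulnA divnMr // divn_mulAC.
rewrite L N sum_period; last by move=> j; rewrite g_period.
case: eqP => b0.
- have th1 : tau_h = 1.
    move: cop; rewrite Ha b0 addn0 coprimeMl => /andP[_].
    by rewrite /coprime gcdnn => /eqP.
  rewrite th1 big_nat1 /g !divn1 mul1n; congr (_ * F _).
  rewrite Ha b0 th1; lia.
- have bp : 0 < beta by lia.
  rewrite (@period_sum F tau_m tau_h alpha beta thp bp bl Ha cop) //; lia.
Qed.
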